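(* Let $P$ be (the right-angled hyperbolic realization of) the composition of compact right-angled hyperbolic polyhedra $P_1$ and $P_2$ along $k$-gonal faces $F_1\subset P_1$, $F_2\subset P_2$. Then $$\Gamma_P \cong \Gamma_{(P_1,F_1)} *_G \Gamma_{(P_2,F_2)}.$$ Here $G$ denotes $\Gamma_{F_1}\cong\Gamma_{F_2}$, embedded in $\Gamma_{(P_1,F_1)}$ and $\Gamma_{(P_2,F_2)}$ as these subgroups and identified with each other via the isomorphism induced by the face identification $F_1\cong F_2$.
   Context: For a compact right-angled hyperbolic polyhedron $P$ with faces $F_1,\dots,F_m$, the reflection group $\Gamma_P$ is generated by the reflections $r_i$ in the planes supporting the faces $F_i$. It has presentation $$\langle r_1,\dots,r_m \mid r_i^2=1,\ (r_ir_j)^2=1 \text{ whenever } F_i,F_j \text{ are adjacent}\rangle.$$ For a face $F$ of $P$, $\Gamma_{(P,F)}$ is the subgroup generated by reflections in all faces of $P$ other than $F$. For $i=1,2$, $\Gamma_{F_i}\subset \Gamma_{(P_i,F_i)}$ is the subgroup generated by the reflections in the $k$ faces of $P_i$ adjacent to $F_i$; it is the reflection group of a right-angled $k$-gon. Composition: glue $P_1,P_2$ along $F_1,F_2$ via a combinatorial isomorphism, delete the interiors of the $k$ edges of the identified face, and demote their endpoints to non-vertices. Faces adjacent to $F_1$ merge with the corresponding faces adjacent to $F_2$. The result is realizable as a right-angled hyperbolic polyhedron. *)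

(* Defs.v *)
From mathcomp Require Import all_boot.
Set Implicit Arguments. Unset Strict Implicit. Unset Printing Implicit Defensive.

Record Grp : Type := Grp_make {
  gcar :> Type;
  gmul : gcar -> gcar -> gcar;
  gone : gcar;
  ginv : gcar -> gcar;
  gmulA : forall x y z, gmul x (gmul y z) = gmul (gmul x y) z;
  gmul1x : forall x, gmul gone x = x;
  gmulx1 : forall x, gmul x gone = x;
  gmulVx : forall x, gmul (ginv x) x = gone;
  gmulxV : forall x, gmul x (ginv x) = gone }.

Definition is_hom (G H : Grp) (f : G -> H) : Prop :=
  forall x y, f (gmul x y) = gmul (f x) (f y).

Definition is_iso (G H : Grp) (f : G -> H) : Prop := is_hom f /\ bijective f.

Definition isomorphic (G H : Grp) : Prop := exists f : G -> H, is_iso f.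

Definition RA_rels (V : Type) (gen : V -> Prop) (adj : V -> V -> Prop)
  (K : Grp) (f : V -> K) : Prop :=
  (forall v, gen v -> gmul (f v) (f v) = gone K) /\
  (forall u v, gen u -> gen v -> adj u v ->
     gmul (gmul (f u) (f v)) (gmul (f u) (f v)) = gone K).

Definition IsRAPresented (V : Type) (gen : V -> Prop) (adj : V -> V -> Prop)
  (H : Grp) (s : V -> H) : Prop :=
  RA_rels gen adj s /\
  forall (K : Grp) (f : V -> K), RA_rels gen adj f ->
    exists h : H -> K,
      [/\ is_hom h, (forall v, gen v -> h (s v) = f v) &
          forall h' : H -> K, is_hom h' -> (forall v, gen v -> h' (s v) = f v) ->
            forall x, h' x = h x].

Definition IsAmalgam (G A B : Grp) (i : G -> A) (j : G -> B)
  (Q : Grp) (a : A -> Q) (b : B -> Q) : Prop :=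
  [/\ is_hom a, is_hom b, (forall x, a (i x) = b (j x)) &
   forall (K : Grp) (f : A -> K) (g : B -> K), is_hom f -> is_hom g ->
     (forall x, f (i x) = g (j x)) ->
     exists h : Q -> K,
       [/\ is_hom h, (forall x, h (a x) = f x), (forall y, h (b y) = g y) &
           forall h' : Q -> K, is_hom h' -> (forall x, h' (a x) = f x) ->
             (forall y, h' (b y) = g y) -> forall z, h' z = h z]].

Definition poly_graph (T : finType) (adj : rel T) : Prop :=
  symmetric adj /\ irreflexive adj.

(* F is a k-gonal face whose adjacent faces are c 0, ..., c (k-1) in cyclic
   order; consecutive ones are adjacent and no other two of them are
   (so they span a right-angled k-gon's reflection group). *)
Definition face_cycle (T : finType) (adj : rel T) (F : T) (k : nat)
  (c : 'I_k -> T) : Prop :=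
  [/\ injective c,
      (forall x, adj F x <-> exists i, c i = x),
      (forall i, adj (c i) (c (ordS i))) &
      (forall i j, adj (c i) (c j) -> j = ordS i \/ i = ordS j)].

Definition cyc_adj (k : nat) (i j : 'I_k) : Prop := j = ordS i \/ i = ordS j.

(* ---------- composition P1 #_{F1 = F2} P2 ----------
   Faces of P are represented inside T1 + T2: all inl x with x <> F1 (faces of
   P1 other than F1, the neighbours c1 i of F1 standing for the merged faces),
   and inr y for faces y of P2 other than F2 and not adjacent to F2.
   glue_norm sends a face of P2 to its representative (c2 i |-> inl (c1 i)). *)
Definition glue_norm (T1 T2 : finType) (k : nat) (c1 : 'I_k -> T1)
  (c2 : 'I_k -> T2) (u : T1 + T2) : T1 + T2 :=
  match u with
  | inl x => inl x
  | inr y => match [pick i | c2 i == y] with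
             | Some i => inl (c1 i)
             | None => inr y
             end
  end.

Definition glue_face (T1 T2 : finType) (k : nat) (F1 : T1) (F2 : T2)
  (c2 : 'I_k -> T2) (u : T1 + T2) : Prop :=
  match u with
  | inl x => x <> F1
  | inr y => y <> F2 /\ forall i, c2 i <> y
  end.

(* faces of P are adjacent iff they come from adjacent faces of P1 or of P2
   (the edges of F1 = F2 are deleted; the edges c_i/c_(i+1) of P1 and P2 fuse) *)
Definition glue_adj (T1 T2 : finType) (adj1 : rel T1) (adj2 : rel T2)
  (F1 : T1) (F2 : T2) (k : nat) (c1 : 'I_k -> T1) (c2 : 'I_k -> T2)
  (u v : T1 + T2) : Prop :=
  (exists x y, [/\ x <> F1, y <> F1, adj1 x y, u = inl x & v = inl y]) \/
  (exists x y, [/\ x <> F2, y <> F2, adj2 x y,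
                   u = glue_norm c1 c2 (inr x) & v = glue_norm c1 c2 (inr y)]).

(* Main.v *)
Require Import Defs.
From mathcomp Require Import all_boot.
Set Implicit Arguments. Unset Strict Implicit. Unset Printing Implicit Defensive.

Lemma hom_one (G H : Grp) (h : G -> H) : is_hom h -> h (gone G) = gone H.
Proof.
move=> hh.
have E : h (gone G) = gmul (h (gone G)) (h (gone G)) by rewrite -hh gmul1x.
rewrite -[RHS](gmulVx (h (gone G))).
rewrite {3}E gmulA gmulVx gmul1x //.
Qed.

Lemma hom_comp (G H K : Grp) (f : G -> H) (g : H -> K) :
  is_hom f -> is_hom g -> is_hom (fun x => g (f x)).
Proof. by move=> hf hg x y; rewrite hf hg. Qed.

Lemma hom_id (G : Grp) : is_hom (fun x : G => x).
Proof. by []. Qed.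

Lemma rels_hom (V : Type) (gen : V -> Prop) (adj : V -> V -> Prop)
  (H K : Grp) (f : V -> H) (h : H -> K) :
  is_hom h -> RA_rels gen adj f -> RA_rels gen adj (fun v => h (f v)).
Proof.
move=> hh [R1 R2]; split.
  by move=> v gv; rewrite -hh R1 // hom_one.
by move=> u v gu gv uv; rewrite -!hh R2 // hom_one.
Qed.

Lemma pres_uniq (V : Type) (gen : V -> Prop) (adj : V -> V -> Prop)
  (H : Grp) (s : V -> H) (K : Grp) (f : V -> K) (h1 h2 : H -> K) :
  IsRAPresented gen adj s -> RA_rels gen adj f ->
  is_hom h1 -> is_hom h2 ->
  (forall v, gen v -> h1 (s v) = f v) -> (forall v, gen v -> h2 (s v) = f v) ->
  forall x, h1 x = h2 x.
Proof.
move=> [_ U] Rf hh1 hh2 E1 E2 x.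
have [h [_ _ Hu]] := U K f Rf.
by rewrite (Hu h1) // (Hu h2).
Qed.

Theorem mainTheorem10
  (T1 T2 : finType) (adj1 : rel T1) (adj2 : rel T2)
  (F1 : T1) (F2 : T2) (k : nat) (c1 : 'I_k -> T1) (c2 : 'I_k -> T2)
  (hk : 5 <= k)
  (hP1 : poly_graph adj1) (hP2 : poly_graph adj2)
  (hF1 : face_cycle adj1 F1 c1) (hF2 : face_cycle adj2 F2 c2)
  (* Gamma_(P1,F1) and Gamma_(P2,F2) *)
  (A1 : Grp) (r1 : T1 -> A1)
  (hA1 : IsRAPresented (fun x => x <> F1) (fun x y => adj1 x y) r1)
  (A2 : Grp) (r2 : T2 -> A2)
  (hA2 : IsRAPresented (fun y => y <> F2) (fun x y => adj2 x y) r2)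
  (* G = reflection group of the right-angled k-gon, embedded as Gamma_F1, Gamma_F2 *)
  (G : Grp) (s : 'I_k -> G)
  (hG : IsRAPresented (fun _ => True) (@cyc_adj k) s)
  (g1 : G -> A1) (hg1 : is_hom g1) (hg1s : forall i, g1 (s i) = r1 (c1 i))
  (g2 : G -> A2) (hg2 : is_hom g2) (hg2s : forall i, g2 (s i) = r2 (c2 i))
  (* Gamma_P for the composition P *)
  (GP : Grp) (rP : T1 + T2 -> GP)
  (hGP : IsRAPresented (glue_face F1 F2 c2) (glue_adj adj1 adj2 F1 F2 c1 c2) rP)
  (* an amalgamated free product Gamma_(P1,F1) *_G Gamma_(P2,F2) *)
  (Q : Grp) (a : A1 -> Q) (b : A2 -> Q)
  (hQ : IsAmalgam g1 g2 a b) :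
  isomorphic GP Q.
Proof.
have [ha hb hab Uq] := hQ.
have [sym1 irr1] := hP1. have [sym2 irr2] := hP2.
have [inj1 nb1 cy1 _] := hF1. have [inj2 nb2 cy2 _] := hF2.
have c1F i : c1 i <> F1.
  move=> E; have : adj1 F1 (c1 i) by apply/nb1; exists i.
  by rewrite E irr1.
have c2F i : c2 i <> F2.
  move=> E; have : adj2 F2 (c2 i) by apply/nb2; exists i.
  by rewrite E irr2.
have [RP _] := hGP.
have [RA1 _] := hA1. have [RA2 _] := hA2.
pose f (u : T1 + T2) : Q := match u with inl x => a (r1 x) | inr y => b (r2 y) end.
have fn y : f (glue_norm c1 c2 (inr y)) = b (r2 y).
  rewrite /glue_norm; case: pickP => [i /eqP Hi | _] //=.
  by rewrite -Hi -hg1s -hg2s hab.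
have Rf : RA_rels (glue_face F1 F2 c2) (glue_adj adj1 adj2 F1 F2 c1 c2) f.
  split.
    case=> [x|y] /= g.
      by rewrite -ha (proj1 RA1) // hom_one.
    by rewrite -hb (proj1 RA2) ?hom_one //; case: g.
  move=> u v _ _ [[x [y [xF yF xy -> ->]]]|[x [y [xF yF xy -> ->]]]].
    by rewrite /= -!ha (proj2 RA1) // hom_one.
  by rewrite !fn -!hb (proj2 RA2) // hom_one.
have [phi [hphi phiE _]] := (proj2 hGP) Q f Rf.
have R1 : RA_rels (fun x => x <> F1) (fun x y => adj1 x y) (fun x => rP (inl x)).
  split; first by move=> v gv; apply: (proj1 RP).
  move=> u v gu gv uv; apply: (proj2 RP) => //.
  by left; exists u, v.
have [f1 [hf1 f1E _]] := (proj2 hA1) GP _ R1.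
have gn y : y <> F2 -> glue_face F1 F2 c2 (glue_norm c1 c2 (inr y)).
  move=> yF; rewrite /glue_norm; case: pickP => [i _ | Hn] //=.
  split=> // i E; have := Hn i; by rewrite E eqxx.
have R2 : RA_rels (fun y => y <> F2) (fun x y => adj2 x y)
            (fun y => rP (glue_norm c1 c2 (inr y))).
  split; first by move=> v gv; apply: (proj1 RP); apply: gn.
  move=> u v gu gv uv; apply: (proj2 RP); try apply: gn => //.
  by right; exists u, v.
have [f2 [hf2 f2E _]] := (proj2 hA2) GP _ R2.
have Rc : RA_rels (fun _ => True) (@cyc_adj k) (fun i => rP (inl (c1 i))).
  split; first by move=> v _; apply: (proj1 RP); exact: c1F.
  move=> i j _ _ ij; apply: (proj2 RP); try exact: c1F.
  left; exists (c1 i), (c1 j); split=> //.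
  case: ij => ->; first exact: cy1.
  by rewrite sym1; exact: cy1.
have compat x : f1 (g1 x) = f2 (g2 x).
  apply: (pres_uniq hG Rc (hom_comp hg1 hf1) (hom_comp hg2 hf2)) => i _.
    by rewrite hg1s f1E.
  rewrite hg2s f2E // /glue_norm; case: pickP => [j /eqP Hj | Hn].
    by rewrite (inj2 _ _ Hj).
  by have := Hn i; rewrite eqxx.
have [psi [hpsi psia psib _]] := Uq GP f1 f2 hf1 hf2 compat.
exists phi; split=> //.
exists psi.
- move=> z.
  have := pres_uniq (h1 := fun x => psi (phi x)) (h2 := fun x => x) hGP RP
    (hom_comp hphi hpsi) (@hom_id GP); apply => // u gu.
  rewrite phiE //; case: u gu => [x|y] /= gu.
    by rewrite psia f1E.
  rewrite psib f2E; last by case: gu.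
  rewrite /glue_norm; case: pickP => [i /eqP Hi | //].
  by case: gu => _ /(_ i).
- move=> z.
  have [h [_ _ _ Uh]] := Uq Q a b ha hb hab.
  have E1 : forall x, phi (psi (a x)) = a x.
    have := pres_uniq (h1 := fun x => phi (psi (a x))) (h2 := a) hA1 (rels_hom ha RA1)
      (hom_comp ha (hom_comp hpsi hphi)) ha.
    apply => // v gv.
    by rewrite psia f1E // phiE.
  have E2 : forall y, phi (psi (b y)) = b y.
    have := pres_uniq (h1 := fun y => phi (psi (b y))) (h2 := b) hA2 (rels_hom hb RA2)
      (hom_comp hb (hom_comp hpsi hphi)) hb.
    apply => // v gv.
    by rewrite psib f2E // phiE ?fn //; apply: gn.
  transitivity (h z); first exact: (Uh (fun z => phi (psi z)) (hom_comp hpsi hphi) E1 E2).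
  by symmetry; apply: (Uh (fun z => z) (@hom_id Q)).
Qed.
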